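(* Let $q$ be a prime power and $F/\mathbb{F}_q$ an algebraic function field with full constant field $\mathbb{F}_q$ of genus $g\geq 2$. For $n\geq 0$ let $A_n$ be the number of effective divisors of degree $n$ of $F$, for $r\geq 1$ let $B_r$ be the number of places of degree $r$ of $F$, let $\Sigma_1=\sum_{n=0}^{g-1}A_n$ and $\Delta_1=\{r:1\leq r\leq g-1,\ B_r\geq 1\}$. Then $$\Sigma_1\leq\prod_{r\in\Delta_1}\binom{B_r+\lfloor\frac{g-1}{r}\rfloor}{\lfloor\frac{g-1}{r}\rfloor}.$$ *)

(* Defs.v *)
From HB Require Import structures.
From mathcomp Require Import all_boot all_order all_algebra.
From Stdlib Require Lists.List.
Set Implicit Arguments. Unset Strict Implicit. Unset Printing Implicit Defensive.
Import Order.TTheory GRing.Theory Num.Theory.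
Local Open Scope ring_scope.

Definition counts (T : Type) (P : T -> Prop) (n : nat) : Prop :=
  exists s : seq T, List.NoDup s /\ size s = n /\ forall x, P x <-> List.In x s.

Section FunctionField.
(* K plays the role of F_q (q = #|K|, automatically a prime power);
   F is the function field, an extension of K via iota. *)
Variables (K : finFieldType) (F : fieldType) (iota : {rmorphism K -> F}).

Definition ev (p : {poly K}) (x : F) : F := (map_poly iota p).[x].

Definition transcendental (x : F) : Prop :=
  forall p : {poly K}, p != 0 -> ev p x != 0.

Definition algebraic (z : F) : Prop :=
  exists p : {poly K}, p != 0 /\ ev p z = 0.

(* F is a finite (algebraic) extension of the rational function field K(x)
   for some x transcendental over K: finitely many e_i span F over K(x). *)
Definition is_function_field : Prop :=
  exists x : F, transcendental x /\
    exists (m : nat) (e : 'I_m -> F), forall f : F,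
      exists (b : {poly K}) (a : 'I_m -> {poly K}),
        ev b x != 0 /\ ev b x * f = \sum_(i < m) ev (a i) x * e i.

Definition full_constant_field : Prop :=
  forall z : F, algebraic z -> exists a : K, z = iota a.

(* Places of F/K, represented by their normalized discrete valuations
   v : F -> int (convention v 0 = 0, the value at 0 being irrelevant). *)
Definition is_place (v : F -> int) : Prop :=
  [/\ forall x y, x != 0 -> y != 0 -> v (x * y) = v x + v y,
      forall x y, x != 0 -> y != 0 -> x + y != 0 ->
        (v x <= v (x + y)) \/ (v y <= v (x + y)),
      forall a : K, a != 0 -> v (iota a) = 0,
      exists t : F, t != 0 /\ v t = 1
    & v 0 = 0].

Definition in_ring (v : F -> int) (x : F) : Prop := x = 0 \/ 0 <= v x.
Definition in_ideal (v : F -> int) (x : F) : Prop := x = 0 \/ 0 < v x.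

(* deg P = r : the residue class field O_P/P has dimension r over K. *)
Definition place_deg (v : F -> int) (r : nat) : Prop :=
  exists e : 'I_r -> F,
    [/\ forall i, in_ring v (e i),
        forall z, in_ring v z -> exists c : 'I_r -> K,
          in_ideal v (z - \sum_(i < r) iota (c i) * e i)
      & forall c : 'I_r -> K,
          in_ideal v (\sum_(i < r) iota (c i) * e i) -> forall i, c i = 0].

Definition is_divisor (D : (F -> int) -> int) : Prop :=
  (forall v, ~ is_place v -> D v = 0) /\
  exists s : seq (F -> int), forall v, D v != 0 -> List.In v s.

Definition effective (D : (F -> int) -> int) : Prop := forall v, 0 <= D v.

Definition div_deg (D : (F -> int) -> int) (n : int) : Prop :=
  exists (s : seq (F -> int)) (ds : seq nat),
    [/\ List.NoDup s,
        forall v, D v != 0 -> List.In v s,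
        List.Forall2 place_deg s ds
      & n = foldr (fun p acc => D p.1 * (p.2)%:Z + acc) 0 (zip s ds)].

Definition eff_div_of_deg (n : nat) (D : (F -> int) -> int) : Prop :=
  [/\ is_divisor D, effective D & div_deg D n%:Z].

Definition inL (D : (F -> int) -> int) (x : F) : Prop :=
  x = 0 \/ forall v, is_place v -> - D v <= v x.

Definition dimL (D : (F -> int) -> int) (m : nat) : Prop :=
  exists e : 'I_m -> F,
    [/\ forall i, inL D (e i),
        forall x, inL D x -> exists c : 'I_m -> K,
          x = \sum_(i < m) iota (c i) * e i
      & forall c : 'I_m -> K,
          \sum_(i < m) iota (c i) * e i = 0 -> forall i, c i = 0].

(* Genus: g = max { deg D - l(D) + 1 : D divisor } (Stichtenoth Def. 1.4.15). *)
Definition is_genus (g : nat) : Prop :=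
  (forall D n m, is_divisor D -> div_deg D n -> dimL D m ->
     n - m%:Z + 1 <= g%:Z) /\
  (exists D n m, [/\ is_divisor D, div_deg D n, dimL D m & n - m%:Z + 1 = g%:Z]).

End FunctionField.

(* Main.v *)
Require Import Defs.
From HB Require Import structures.
From mathcomp Require Import all_boot all_order all_algebra zify.
From Stdlib Require Import ClassicalEpsilon FunctionalExtensionality.
Set Implicit Arguments. Unset Strict Implicit. Unset Printing Implicit Defensive.
Import Order.TTheory GRing.Theory Num.Theory.

Definition pl (T : Type) := T -> int.
Definition pleq (T : Type) (x y : pl T) : bool :=
  if excluded_middle_informative (x = y) then true else false.
Lemma pleqP (T : Type) : Equality.axiom (@pleq T).
Proof. by move=> x y; rewrite /pleq; case: excluded_middle_informative => H; constructor. Qed.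
HB.instance Definition _ (T : Type) := hasDecEq.Build (pl T) (@pleqP T).

Lemma In_mem (T : eqType) (x : T) s : List.In x s <-> x \in s.
Proof.
elim: s => //= a s IH; rewrite in_cons; split.
  by case=> [->|/IH ->]; [rewrite eqxx | rewrite orbT].
by case/orP => [/eqP ->|/IH]; auto.
Qed.

Lemma NoDup_uniq (T : eqType) (s : seq T) : List.NoDup s <-> uniq s.
Proof.
elim: s => [|a s IH]; first by split => // _; constructor.
split.
  move=> H; inversion H; subst; rewrite /=; apply/andP; split; last by apply/IH.
  by apply/negP => /In_mem.
move=> /= /andP[Ha Hs]; constructor; last by apply/IH.
by move/In_mem; rewrite (negbTE Ha).
Qed.

Lemma Forall2_nth (A B0 : Type) (P : A -> B0 -> Prop) s t : List.Forall2 P s t ->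
  size s = size t /\ forall i x0 y0, (i < size s)%N -> P (nth x0 s i) (nth y0 t i).
Proof.
elim=> [|x y s' t' Hxy _ [Hsz IH]]; first by split.
split; first by rewrite /= Hsz.
by move=> [|i] x0 y0 //= Hi; apply: IH.
Qed.

Local Open Scope ring_scope.

Lemma foldr_zip_sum (T : eqType) (D : T -> int) (s : seq T) (ds : seq nat) :
  uniq s -> size s = size ds ->
  foldr (fun p acc => D p.1 * (p.2)%:Z + acc) 0 (zip s ds) =
  \sum_(w <- s) D w * (nth 0%N ds (index w s))%:Z.
Proof.
elim: s ds => [|x s IH] [|d ds] //=; first by rewrite big_nil.
case/andP => xs us [sz]; rewrite big_cons eqxx IH //; congr (_ + _).
apply: eq_big_seq => w ws /=; case: eqP => // ew.
by rewrite ew ws in xs.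
Qed.

Lemma place_deg0 (K : finFieldType) (F : fieldType) (iota : {rmorphism K -> F}) v :
  is_place iota v -> ~ place_deg iota v 0.
Proof.
case=> Hmul _ _ _ _ [e [_ H _]].
have v1 : v 1 = 0.
  have := Hmul 1 1 (oner_neq0 _) (oner_neq0 _); rewrite mulr1 => E; lia.
have [|c] := H 1; first by right; rewrite v1.
rewrite big_ord0 subr0; case=> [/eqP|]; first by rewrite oner_eq0.
by rewrite v1.
Qed.

Lemma eff_abs (T : Type) (D : T -> int) w : (0 <= D w) -> D w = (absz (D w))%:Z.
Proof. by case: (D w). Qed.

Lemma wit_facts (K : finFieldType) (F : fieldType) (iota : {rmorphism K -> F}) (n : nat)
   (D : (F -> int) -> int) (s : seq (pl F)) (ds : seq nat) :
  effective D -> is_divisor iota D -> uniq s ->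
  (forall v, D v != 0 -> List.In v s) -> List.Forall2 (place_deg iota) s ds ->
  n%:Z = foldr (fun p acc => D p.1 * (p.2)%:Z + acc) 0 (zip s ds) ->
  (n = \sum_(w <- s) absz (D w) * nth 0 ds (index w s))%N /\
  (forall w : pl F, D w != 0 -> [/\ w \in s, is_place iota w, place_deg iota w (nth 0 ds (index w s)),
      (0 < nth 0 ds (index w s))%N & (nth 0 ds (index w s) <= n)%N]).
Proof.
move=> HE [Hdiv _] us Hsupp /(@Forall2_nth (pl F) nat)[sz Hnth] Hfold.
have Hn : (n = \sum_(w <- s) absz (D w) * nth 0 ds (index w s))%N.
  apply/eqP; rewrite -(@eqr_nat int); apply/eqP.
  rewrite [LHS]natz Hfold (_ : foldr _ _ _ = \sum_(w <- s) D w * (nth 0%N ds (index w s))%:Z);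
    last exact: foldr_zip_sum.
  rewrite natr_sum; apply: eq_bigr => w _.
  by rewrite natrM !natz -(eff_abs (HE w)).
split => // w Dw.
have ws : w \in s by apply/In_mem/Hsupp.
have pw : is_place iota w.
  by case: (classic (is_place iota w)) => // /Hdiv /eqP; rewrite (negbTE Dw).
have pd : place_deg iota w (nth 0%N ds (index w s)).
  by have := Hnth (index w s) w 0%N; rewrite nth_index // index_mem; apply.
split => //.
  by rewrite lt0n; apply/negP => /eqP d0; apply: (place_deg0 pw); rewrite -d0.
rewrite Hn (bigD1_seq w) //= (leq_trans _ (leq_addr _ _)) // leq_pmull //.
by rewrite absz_gt0.
Qed.

Local Close Scope ring_scope.

Definition incr_head (t : seq nat) := match t with a :: t' => a.+1 :: t' | [::] => [::] end.

Fixpoint Lenum (B k : nat) : seq (seq nat) :=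
  match B with
  | 0 => [:: [::]]
  | B'.+1 => let fix Lk k := match k with
      | 0 => [:: nseq B'.+1 0]
      | k'.+1 => [seq 0 :: t | t <- Lenum B' k] ++ [seq incr_head t | t <- Lk k'] end in Lk k
  end.

Lemma LenumS B k : Lenum B.+1 k.+1 = [seq 0 :: t | t <- Lenum B k.+1] ++ [seq incr_head t | t <- Lenum B.+1 k].
Proof. by []. Qed.

Lemma size_Lenum B k : size (Lenum B k) = 'C(B + k, k).
Proof.
elim: B k => [|B IHB] k; first by rewrite add0n binn.
elim: k => [|k IHk]; first by rewrite bin0.
rewrite LenumS size_cat !size_map IHB IHk !addSn !addnS binS addnC.
by rewrite [RHS]binS addnC.
Qed.

Lemma sumn0_nseq (t : seq nat) : sumn t = 0 -> t = nseq (size t) 0.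
Proof. by elim: t => //= a t IH /eqP; rewrite addn_eq0 => /andP[/eqP-> /eqP/IH <-]. Qed.

Lemma mem_Lenum B k t : size t = B -> (sumn t <= k)%N -> t \in Lenum B k.
Proof.
elim: B k t => [|B IHB] k t; first by case: t.
elim: k t => [|k IHk] t.
  by move=> Hs; rewrite leqn0 => /eqP/sumn0_nseq ->; rewrite Hs mem_seq1.
case: t => // a t Hs0 Hsum; have Hs : size t = B by case: Hs0.
rewrite LenumS mem_cat.
case: a {Hs0} Hsum => [|a] Hsum.
  by rewrite (map_f (fun t => 0 :: t)) // IHB.
apply/orP; right; apply/mapP; exists (a :: t) => //.
by apply: IHk; rewrite /= ?Hs //; move: Hsum; rewrite /= addSn.
Qed.

Definition img (P : eqType) (Pl : nat -> seq P) (g : nat) (Dn degW : P -> nat) :=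
  [seq [seq (if degW w == r then Dn w else 0) | w <- Pl r] | r <- iota 1 (g - 1)].
Definition nof (g : nat) (im : seq (seq nat)) :=
  \sum_(r <- iota 1 (g - 1)) r * sumn (nth [::] im r.-1).
Definition Dof (P : eqType) (Pl : nat -> seq P) (g : nat) (im : seq (seq nat)) (w : P) :=
  \sum_(r <- iota 1 (g - 1))
     (if w \in Pl r then nth 0 (nth [::] im r.-1) (index w (Pl r)) else 0).

Lemma nth_img (P : eqType) Pl g (Dn degW : P -> nat) r : r \in iota 1 (g - 1) ->
  nth [::] (img Pl g Dn degW) r.-1 = [seq (if degW w == r then Dn w else 0) | w <- Pl r].
Proof.
rewrite mem_iota => /andP[r1 rg]; rewrite /img (nth_map 0); last first.
  by rewrite size_iota; case: r r1 rg => // r _; rewrite add1n ltnS.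
by rewrite nth_iota; case: r r1 rg => // r _; rewrite add1n ltnS.
Qed.

Section Abs.
Variables (P : eqType) (Pl : nat -> seq P) (g n : nat) (Dn degW : P -> nat) (s : seq P).
Hypotheses (HPl : forall r, (0 < r)%N -> uniq (Pl r)) (Hs : uniq s) (Hn : (n < g)%N)
  (Hsum : n = \sum_(w <- s) Dn w * degW w)
  (Hsupp : forall w, Dn w != 0 -> [/\ w \in s, w \in Pl (degW w), (0 < degW w)%N & (degW w <= n)%N]).

Lemma degW_iota w : Dn w != 0 -> degW w \in iota 1 (g - 1).
Proof.
move=> /Hsupp[_ _ d1 dn]; rewrite mem_iota d1 /= subnKC //; last by case: g Hn.
by apply: leq_ltn_trans Hn.
Qed.

Lemma Dof_img w : Dof Pl g (img Pl g Dn degW) w = Dn w.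
Proof.
rewrite /Dof.
have E : forall r, r \in iota 1 (g - 1) ->
   (if w \in Pl r then nth 0 (nth [::] (img Pl g Dn degW) r.-1) (index w (Pl r)) else 0)
   = if (w \in Pl r) && (degW w == r) then Dn w else 0.
  move=> r Hr; rewrite nth_img //; case: ifP => //= wP.
  by rewrite (nth_map w) ?index_mem // nth_index.
rewrite (eq_big_seq _ E).
have [D0|D0] := eqVneq (Dn w) 0.
  by rewrite big1_seq // => r _; rewrite D0; case: ifP.
have /Hsupp[_ wP _ _] := D0.
rewrite (bigD1_seq (degW w)) ?degW_iota ?iota_uniq //= wP eqxx /=.
rewrite big1_seq ?addn0 // => r /andP[/= rne _].
by rewrite eq_sym (negbTE rne) andbF.
Qed.

Lemma nof_img : nof g (img Pl g Dn degW) = n.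
Proof.
rewrite /nof.
have E1 : forall r, r \in iota 1 (g - 1) ->
   r * sumn (nth [::] (img Pl g Dn degW) r.-1) =
   r * \sum_(w <- s) (if degW w == r then Dn w else 0).
  move=> r Hr; rewrite nth_img // sumnE big_map; congr (_ * _).
  have r1 : (0 < r)%N by move: Hr; rewrite mem_iota => /andP[].
  have E2 : forall t : seq P, \sum_(w <- t) (if degW w == r then Dn w else 0) =
      \sum_(w <- [seq w <- t | (degW w == r) && (Dn w != 0)]) Dn w.
    move=> t; rewrite big_filter [RHS]big_mkcond; apply: eq_bigr => w _.
    by case: (degW w == r) => //=; case: eqP => // ->.
  rewrite !E2; apply: perm_big; apply: uniq_perm; rewrite ?filter_uniq ?HPl //.
  move=> w; rewrite !mem_filter; apply/andP/andP => -[/andP[/eqP dw D0] wP]; split;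
    rewrite ?dw ?eqxx ?D0 //; have [ws wP' _ _] := Hsupp D0; by rewrite -?dw.
rewrite (eq_big_seq _ E1) Hsum.
rewrite (eq_bigr (fun w => \sum_(r <- iota 1 (g - 1)) (if degW w == r then Dn w * r else 0))).
  rewrite exchange_big /=; apply: eq_bigr => r _; rewrite mulnC big_distrl /=.
  by apply: eq_bigr => w _; case: ifP.
move=> w _; have [D0|D0] := eqVneq (Dn w) 0.
  by rewrite D0 mul0n big1 // => r _; case: ifP.
rewrite (bigD1_seq (degW w)) ?degW_iota ?iota_uniq //= eqxx.
by rewrite big1_seq ?addn0 // => r /andP[/= rne _]; rewrite eq_sym (negbTE rne).
Qed.

End Abs.

Fixpoint prodl (xs : seq (seq (seq nat))) : seq (seq (seq nat)) :=
  match xs with [::] => [:: [::]] | x :: xs' => [seq a :: b | a <- x, b <- prodl xs'] end.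

Lemma size_prodl xs : size (prodl xs) = \prod_(x <- xs) size x.
Proof. by elim: xs => [|x xs IH]; rewrite ?big_nil ?big_cons //= size_allpairs IH. Qed.

Lemma mem_prodl ls xs : all2 (fun a x => a \in x) ls xs -> ls \in prodl xs.
Proof.
elim: xs ls => [|x xs IH] [|a ls] //= /andP[ax /IH H].
by apply: (allpairs_f (fun a b => a :: b)).
Qed.

Lemma all2_map_iota (S T : Type) (f : nat -> S) (h : nat -> T) (p : S -> T -> bool) rs :
  (forall r, r \in rs -> p (f r) (h r)) -> all2 p [seq f r | r <- rs] [seq h r | r <- rs].
Proof.
elim: rs => //= r rs IH H; rewrite H ?mem_head // IH // => r' r'in.
by apply: H; rewrite in_cons r'in orbT.
Qed.

Lemma img_in (P : eqType) (Pl : nat -> seq P) g n (Dn degW : P -> nat) (B : nat -> nat) :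
  (forall r, (0 < r)%N -> size (Pl r) = B r) ->
  nof g (img Pl g Dn degW) = n -> (n < g)%N ->
  img Pl g Dn degW \in prodl [seq Lenum (B r) ((g - 1) %/ r)%N | r <- iota 1 (g - 1)%N].
Proof.
move=> HB Hnof Hn; apply: mem_prodl; rewrite /img; apply: all2_map_iota => r Hr.
have r1 : (0 < r)%N by move: Hr; rewrite mem_iota => /andP[].
apply: mem_Lenum; first by rewrite size_map HB.
rewrite leq_divRL // mulnC -(@nth_img P Pl g Dn degW r Hr).
apply: (@leq_trans n); last by rewrite -ltnS subn1 prednK //; apply: leq_ltn_trans Hn.
rewrite -Hnof /nof (bigD1_seq r) ?iota_uniq //=; exact: leq_addr.
Qed.

Local Open Scope ring_scope.

Lemma abs_all (P : eqType) (Pl : nat -> seq P) (g n : nat) (Dn degW : P -> nat) (s : seq P) :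
  (forall r, (0 < r)%N -> uniq (Pl r)) -> uniq s -> (n < g)%N ->
  n = \sum_(w <- s) Dn w * degW w ->
  (forall w, Dn w != 0 -> [/\ w \in s, w \in Pl (degW w), (0 < degW w)%N & (degW w <= n)%N]) ->
  nof g (img Pl g Dn degW) = n /\ forall w, Dof Pl g (img Pl g Dn degW) w = Dn w.
Proof.
move=> H1 H2 H3 H4 H5; split; first exact: (nof_img H1 H2 H3 H4 H5).
by move=> w; apply: (Dof_img H3 H5).
Qed.

Lemma In_cat (T : Type) (x : T) (a b : seq T) : List.In x (a ++ b) -> List.In x a \/ List.In x b.
Proof.
elim: a => /= [|y a IH] H; first by right.
case: H => [H|H]; first by left; left.
by case: (IH H) => H'; auto.
Qed.

Lemma In_flatten (T : Type) (x : T) ss : List.In x (flatten ss) -> exists s, List.In s ss /\ List.In x s.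
Proof.
elim: ss => // s ss IH H.
case: (In_cat H) => [H1|H1]; first by exists s; split; [left|].
by case: (IH H1) => s' [H2 H3]; exists s'; split; [right|].
Qed.

Lemma In_map (T U : Type) (f : T -> U) y s : List.In y (map f s) -> exists x, List.In x s /\ y = f x.
Proof.
elim: s => // a s IH [H|H]; first by exists a; split; [left|].
by case: (IH H) => x [H1 H2]; exists x; split; [right|].
Qed.

Lemma NoDup_cat (T : Type) (a b : seq T) : List.NoDup a -> List.NoDup b ->
  (forall x, List.In x a -> ~ List.In x b) -> List.NoDup (a ++ b).
Proof.
elim: a => //= x a IH Ha Hb Hd; inversion Ha; subst; constructor.
  by move=> H'; case: (In_cat H') => // H''; apply: (Hd x); [left|].
by apply: IH => // y yi; apply: Hd; right.
Qed.

Lemma NoDup_map_inj (T U : Type) (f : T -> U) s : injective f -> List.NoDup s -> List.NoDup (map f s).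
Proof.
move=> fi; elim: s => //= [_|a s IH H]; first constructor.
inversion H; subst; constructor; last exact: IH.
by move=> H'; case: (In_map H') => x [xs /fi e]; subst.
Qed.

Lemma mem_map_In (T : Type) (U : eqType) (f : T -> U) y s : y \in map f s -> exists x, List.In x s /\ y = f x.
Proof.
elim: s => //= a s IH; rewrite in_cons => /orP[/eqP ->|/IH [x [H1 H2]]]; first by exists a; auto.
by exists x; auto.
Qed.

Lemma uniq_map_NoDup (T : Type) (U : eqType) (f : T -> U) s : List.NoDup s ->
  (forall x y, List.In x s -> List.In y s -> f x = f y -> x = y) -> uniq (map f s).
Proof.
elim: s => //= a s IH H Hi; inversion H; subst; apply/andP; split.
  apply/negP => /mem_map_In [x [xs e]].
  by have ax := Hi a x (or_introl erefl) (or_intror xs) e; subst.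
by apply: IH => // x y xs ys; apply: Hi; auto.
Qed.

Lemma NoDup_tag (T : Type) (f : nat -> seq T) (ns : seq nat) : uniq ns ->
  (forall n, List.NoDup (f n)) -> List.NoDup (flatten [seq [seq (n, x) | x <- f n] | n <- ns]).
Proof.
elim: ns => /= [_ _|n ns IH /andP[nns uns] H]; first constructor.
apply: NoDup_cat; first by apply: NoDup_map_inj => // a b [].
  exact: IH.
move=> [m y] H1 H2; case: (In_map H1) => z [_ [em _]]; subst m.
case: (In_flatten H2) => s' [H3 H4]; case: (In_map H3) => m' [m'in es]; subst s'.
case: (In_map H4) => z' [_ [e _]]; subst m'.
by move/In_mem: m'in; rewrite (negbTE nns).
Qed.

Local Close Scope ring_scope.

Theorem theorem3p6 (K : finFieldType) (F : fieldType)
    (iota : {rmorphism K -> F}) (g : nat) (A B : nat -> nat) :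
  is_function_field iota ->
  full_constant_field iota ->
  is_genus iota g ->
  (2 <= g)%N ->
  (forall n : nat, counts (eff_div_of_deg iota n) (A n)) ->
  (forall r : nat, (1 <= r)%N ->
     counts (fun v => is_place iota v /\ place_deg iota v r) (B r)) ->
  (\sum_(0 <= n < g) A n
     <= \prod_(1 <= r < g | (1 <= B r)%N) 'C(B r + (g - 1) %/ r, (g - 1) %/ r))%N.
Proof.
move=> _ _ _ g2 HA HB.
have HP : forall r, exists s : seq (pl F), (0 < r)%N ->
    [/\ uniq s, size s = B r & forall x : pl F, (is_place iota x /\ place_deg iota x r) <-> x \in s].
  move=> r; case: (posnP r) => [->|r0]; first by exists [::].
  have [s [nd [sz H]]] := HB r r0; exists s => _; split => //; first exact/NoDup_uniq.
  by move=> x; rewrite -In_mem; exact: H.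
pose Pl r := proj1_sig (constructive_indefinite_description _ (HP r)).
have HPl : forall r, (0 < r)%N ->
    [/\ uniq (Pl r), size (Pl r) = B r & forall x : pl F, (is_place iota x /\ place_deg iota x r) <-> x \in Pl r].
  by move=> r; exact: (proj2_sig (constructive_indefinite_description _ (HP r))).
pose Dl n := proj1_sig (constructive_indefinite_description _ (HA n)).
have HDl : forall n, List.NoDup (Dl n) /\ size (Dl n) = A n /\
    forall D, eff_div_of_deg iota n D <-> List.In D (Dl n).
  by move=> n; exact: (proj2_sig (constructive_indefinite_description _ (HA n))).
have HW : forall x : nat * ((F -> int) -> int), exists W : seq (pl F) * seq nat,
    div_deg iota x.2 x.1 ->
    [/\ List.NoDup W.1, forall v, x.2 v != 0%R -> List.In v W.1,
        List.Forall2 (place_deg iota) W.1 W.2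
      & Posz x.1 = foldr (fun p acc => (x.2 p.1 * Posz p.2 + acc)%R) 0%R (zip W.1 W.2)].
  move=> [n D]; case: (classic (div_deg iota D n)) => [[s [ds H]]|H]; first by exists (s, ds).
  by exists ([::], [::]).
pose W x := proj1_sig (constructive_indefinite_description _ (HW x)).
pose degW x (w : pl F) := nth 0 (W x).2 (index w (W x).1).
pose Dn (D : (F -> int) -> int) (w : pl F) := absz (D w).
pose phi x := img Pl g (Dn x.2) (degW x).
pose valid (x : nat * ((F -> int) -> int)) := (x.1 < g)%N /\ eff_div_of_deg iota x.1 x.2.
have Hval : forall x, valid x -> nof g (phi x) = x.1 /\ (forall w, Dof Pl g (phi x) w = Dn x.2 w).
  move=> [n D] [/= ng [Hdiv HE Hdeg]].
  have [nd sup F2 fold] := proj2_sig (constructive_indefinite_description _ (HW (n, D))) Hdeg.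
  have us : uniq (W (n, D)).1 by apply/NoDup_uniq.
  have [Hn Hs] := wit_facts HE Hdiv us sup F2 fold.
  apply: (@abs_all (pl F) Pl g n (Dn D) (degW (n, D)) (W (n, D)).1) => //.
  - by move=> r r0; case: (HPl r r0).
  - move=> w; rewrite absz_eq0 => /Hs [ws pw pd d0 dn]; split => //.
    by case: (HPl _ d0) => _ _ /(_ w) [H _]; apply: H.
have Hinj : forall x y, valid x -> valid y -> phi x = phi y -> x = y.
  move=> [n D] [n' D'] vx vy E.
  have [a1 a2] := Hval _ vx; have [b1 b2] := Hval _ vy.
  have nn : n = n' by rewrite -[n]/((n, D).1) -a1 E b1.
  have DD : D = D'.
    apply: functional_extensionality => w.
    case: vx => _ [_ HE _]; case: vy => _ [_ HE' _]; rewrite /= in HE HE'.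
    rewrite (eff_abs (HE w)) (eff_abs (HE' w)); congr Posz.
    have := a2 w; have := b2 w; rewrite E /Dn /= => B1 A1; by rewrite -A1 B1.
  by rewrite nn DD.
have Hmem : forall x, valid x -> phi x \in prodl [seq Lenum (B r) ((g - 1) %/ r)%N | r <- seq.iota 1 (g - 1)%N].
  move=> x vx; have [a1 _] := Hval _ vx; apply: (@img_in (pl F) Pl g x.1 (Dn x.2) (degW x) B _ a1).
    by move=> r r0; case: (HPl r r0).
  by case: vx.
pose S := flatten [seq [seq (n, D) | D <- Dl n] | n <- seq.iota 0 g].
have validS : forall x, List.In x S -> valid x.
  move=> x H1; case: (In_flatten H1) => s' [H2 H3]; case: (In_map H2) => n [nin es]; subst s'.
  case: (In_map H3) => D [Din ex]; subst x.
  split => /=; first by move/In_mem: nin; rewrite mem_iota.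
  by case: (HDl n) => _ [_ /(_ D) [_ H]]; apply: H.
have NoDupS : List.NoDup S.
  by apply: NoDup_tag; [exact: iota_uniq | move=> n; case: (HDl n)].
have sizeS : size S = \sum_(0 <= n < g) A n.
  rewrite size_flatten /shape -map_comp sumnE big_map /index_iota subn0.
  by apply: eq_bigr => n _; rewrite /= size_map; case: (HDl n) => _ [-> _].
rewrite -sizeS -(size_map phi).
have -> : (\prod_(1 <= r < g | (1 <= B r)%N) 'C(B r + (g - 1) %/ r, (g - 1) %/ r))%N =
    size (prodl [seq Lenum (B r) ((g - 1) %/ r)%N | r <- seq.iota 1 (g - 1)%N]).
  rewrite size_prodl big_map big_mkcond /index_iota; apply: eq_bigr => r _.
  rewrite size_Lenum; case: ifP => // /negbT; rewrite -ltnNge ltnS leqn0 => /eqP ->.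
  by rewrite add0n binn.
apply: uniq_leq_size.
  by apply: uniq_map_NoDup => // x y xs ys; apply: Hinj; apply: validS.
by move=> y /mem_map_In [x [xs ->]]; apply: Hmem; apply: validS.
Qed.
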